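(* Let $K,L\in\mathcal{K}_+^2$ be convex bodies in $\mathbb{R}^2$. Then $$\frac12\int_{\partial L}\frac{1}{\kappa_{L,K}}\,d\mu_{\partial L;K}-V(L)\geq\lambda_2(-L_K)\Big(\frac{V(K,L)^2}{V(K)}-V(L)\Big).$$ When $K=B$ is the unit disc, this reduces to $$\frac12\int_{\partial L}\frac1{\kappa_L}\,d\mu_{\partial L}-V(L)\geq4\Big(\frac{|\partial L|^2}{4\pi}-V(L)\Big).$$
   Context: Here $n=2$. $\mathcal{K}_+^2$ is the class of convex bodies in $\mathbb{R}^2$ containing the origin in their interior with $C^2$ boundary and positive curvature, and $h_K$ is the support function on $\mathbb{S}^1$. $V(L)$ is area, $V(K,L)$ is the mixed area, and $|\partial L|$ is the perimeter. Curvatures and measures on $\partial L$: - $\nu:\partial L\to\mathbb{S}^1$ is the Gauss map of $L$, $\kappa_L$ the curvature of $\partial L$, and $d\mu_{\partial L}$ the arc-length measure. - For $X\in\partial L$, $\kappa_{L,K}(X)=\kappa_L(X)/\kappa_K(Y)$, where $Y\in\partial K$ is the point of $\partial K$ with outer normal $\nu(X)$. Equivalently, $\kappa_{L,K}$ is the eigenvalue of the anisotropic Weingarten map $d\nu_\gamma$, with $\nu_\gamma=h_K(\nu)\nu+\nabla h_K(\nu)$. - $d\mu_{\partial L;K}=h_K(\nu)\,d\mu_{\partial L}$. Notation on $\mathbb{S}^1$: - $D^2h=h''+h$ and $dV_K=\frac12h_KD^2h_K\,d\mu$. - $L_Kz=(D^2h_K)^{-1}D^2(zh_K)-z$ and $\ell_v^K(x)=\langle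 x,v\rangle/h_K(x)$. - $\lambda_2(-L_K)$ is the infimum of $\int z(-L_Kz)dV_K/\int z^2dV_K$ over nonzero $z\in C^2(\mathbb{S}^1)$ with $\int z\,dV_K=0$ and $\int z\ell_v^KdV_K=0$ for all $v\in\mathbb{R}^2$. *)

(* Defs.v *)
From Stdlib Require Import Reals.
From Coquelicot Require Import Coquelicot.
Open Scope R_scope.

(* Points of S^1 are parametrized by the angle t : u(t) = (cos t, sin t).
   Functions on S^1 are 2*PI-periodic functions R -> R. *)

Definition C2_S1 (z : R -> R) : Prop :=
  (forall t, z (t + 2 * PI) = z t) /\
  (forall t, ex_derive z t) /\
  (forall t, ex_derive (Derive z) t) /\
  (forall t, continuous (Derive (Derive z)) t).

Definition D2 (h : R -> R) (t : R) : R := Derive (Derive h) t + h t.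

Definition int_S1 (f : R -> R) : R := RInt f 0 (2 * PI).

(* A convex body K in K_+^2, given by its support function h_K on S^1:
   K has C^2 boundary with positive curvature iff h_K is C^2 with
   D^2 h_K > 0; the origin is interior iff h_K > 0. *)
Definition body_Kplus2 (h : R -> R) : Prop :=
  C2_S1 h /\ (forall t, 0 < h t) /\ (forall t, 0 < D2 h t).

(* Boundary point of the body with support function h whose outer unit
   normal is u(t):  X(t) = h(t) u(t) + h'(t) u'(t)  (inverse Gauss map). *)
Definition bdX1 (h : R -> R) (t : R) : R := h t * cos t - Derive h t * sin t.
Definition bdX2 (h : R -> R) (t : R) : R := h t * sin t + Derive h t * cos t.

Definition bd_speed (h : R -> R) (t : R) : R :=
  sqrt (Derive (bdX1 h) t ^ 2 + Derive (bdX2 h) t ^ 2).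

(* Integral over the boundary of the body with support function h, with
   respect to arc length d mu_{\partial L}, of a function given in terms of
   the normal parameter t (i.e. f t is the value at the point X(t), where
   nu(X(t)) = u(t)). *)
Definition bd_integral (h : R -> R) (f : R -> R) : R :=
  RInt (fun t => f t * bd_speed h t) 0 (2 * PI).

(* Curvature of the boundary at X(t): rate of turning of the normal angle
   with respect to arc length, d t / d s. *)
Definition curv (h : R -> R) (t : R) : R := / bd_speed h t.

(* kappa_{L,K}(X(t)) = kappa_L(X(t)) / kappa_K(Y(t)), Y(t) = point of dK with
   outer normal u(t). *)
Definition curv_rel (hL hK : R -> R) (t : R) : R := curv hL t / curv hK t.

(* Area V(L) = 1/2 \int_{dL} <X, nu> d mu_{dL}   (<X(t),u(t)> = h(t)). *)
Definition area (hL : R -> R) : R := / 2 * bd_integral hL hL.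

(* Mixed area V(K,L) = 1/2 \int_{dL} h_K(nu) d mu_{dL}. *)
Definition mixed_area (hK hL : R -> R) : R := / 2 * bd_integral hL hK.

Definition perimeter (hL : R -> R) : R := bd_integral hL (fun _ => 1).

Definition int_dVK (hK : R -> R) (f : R -> R) : R :=
  int_S1 (fun t => f t * (/ 2 * hK t * D2 hK t)).

Definition L_op (hK z : R -> R) (t : R) : R :=
  D2 (fun s => z s * hK s) t / D2 hK t - z t.

Definition ell (hK : R -> R) (v1 v2 : R) (t : R) : R :=
  (v1 * cos t + v2 * sin t) / hK t.

Definition rayleigh_set (hK : R -> R) (q : R) : Prop :=
  exists z : R -> R,
    C2_S1 z /\ (exists t, z t <> 0) /\
    int_dVK hK z = 0 /\
    (forall v1 v2, int_dVK hK (fun t => z t * ell hK v1 v2 t) = 0) /\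
    q = int_dVK hK (fun t => z t * (- L_op hK z t))
        / int_dVK hK (fun t => z t ^ 2).

Definition lambda2 (hK : R -> R) : Rbar := Glb_Rbar (rayleigh_set hK).

(* Main.v *)
Require Import Defs.
From Stdlib Require Import Reals.
From Coquelicot Require Import Coquelicot.
From Stdlib Require Import Lra Psatz FunctionalExtensionality Classical.
Open Scope R_scope.

Lemma c_plus (f g : R -> R) (t : R) : continuous f t -> continuous g t -> continuous (fun x => f x + g x) t.
Proof. intros; apply (continuous_plus f g); auto. Qed.
Lemma c_mult (f g : R -> R) (t : R) : continuous f t -> continuous g t -> continuous (fun x => f x * g x) t.
Proof. intros; apply (continuous_mult f g); auto. Qed.
Lemma c_opp (f : R -> R) (t : R) : continuous f t -> continuous (fun x => - f x) t.
Proof. intros; apply (continuous_opp f); auto. Qed.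
Lemma c_minus (f g : R -> R) (t : R) : continuous f t -> continuous g t -> continuous (fun x => f x - g x) t.
Proof. intros; apply (continuous_minus f g); auto. Qed.
Lemma c_const (c t : R) : continuous (fun _ => c) t.
Proof. apply continuous_const. Qed.
Lemma c_id (t : R) : continuous (fun x => x) t.
Proof. apply continuous_id. Qed.
Lemma c_inv (f : R -> R) (t : R) : continuous f t -> f t <> 0 -> continuous (fun x => / f x) t.
Proof.
  intros Hf Hn. apply (continuous_comp f Rinv). auto.
  apply continuity_pt_filterlim. apply continuity_pt_inv; auto. apply continuity_pt_id.
Qed.
Lemma c_div (f g : R -> R) (t : R) : continuous f t -> continuous g t -> g t <> 0 -> continuous (fun x => f x / g x) t.
Proof. intros. unfold Rdiv. apply c_mult; auto. apply c_inv; auto. Qed.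
Lemma c_cos (f : R -> R) (t : R) : continuous f t -> continuous (fun x => cos (f x)) t.
Proof. intros. apply (continuous_comp f cos); auto. apply continuity_pt_filterlim. apply continuity_cos. Qed.
Lemma c_sin (f : R -> R) (t : R) : continuous f t -> continuous (fun x => sin (f x)) t.
Proof. intros. apply (continuous_comp f sin); auto. apply continuity_pt_filterlim. apply continuity_sin. Qed.
Lemma c_cos' t : continuous cos t.
Proof. apply continuity_pt_filterlim. apply continuity_cos. Qed.
Lemma c_sin' t : continuous sin t.
Proof. apply continuity_pt_filterlim. apply continuity_sin. Qed.
Lemma c_pow (f : R -> R) n (t : R) : continuous f t -> continuous (fun x => f x ^ n) t.
Proof. intros. induction n. simpl. apply c_const. simpl. apply c_mult; auto. Qed.

Definition cont (f : R -> R) := forall t : R, continuous f t.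
Lemma c_app (f g : R -> R) (t : R) : cont f -> continuous g t -> continuous (fun x => f (g x)) t.
Proof. intros Hf Hg. apply (continuous_comp g f); auto. Qed.

Ltac cont := repeat (match goal with
  | H : cont ?f |- continuous ?f _ => apply H
  | H : cont ?f |- continuous (fun x => ?f x) _ => apply H
  | H : cont ?f |- continuous (fun x => ?f _) _ => apply (c_app f); [exact H|]
  | |- continuous (fun _ => ?c) _ => apply c_const
  | |- continuous (fun x => x) _ => apply c_id
  | |- continuous (fun x => _ + _) _ => apply c_plus
  | |- continuous (fun x => _ - _) _ => apply c_minus
  | |- continuous (fun x => _ * _) _ => apply c_mult
  | |- continuous (fun x => _ / _) _ => apply c_div
  | |- continuous (fun x => - _) _ => apply c_opp
  | |- continuous (fun x => / _) _ => apply c_inv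
  | |- continuous (fun x => _ ^ _) _ => apply c_pow
  | |- continuous (fun x => cos _) _ => apply c_cos
  | |- continuous (fun x => sin _) _ => apply c_sin
  | |- continuous cos _ => apply c_cos'
  | |- continuous sin _ => apply c_sin'
  | H : forall t, continuous ?f t |- continuous ?f _ => apply H
  | H : forall t, continuous ?f t |- continuous (fun x => ?f x) _ => apply H
  end).

Lemma d_eq (f : R -> R) (t : R) (l l' : R) : is_derive f t l -> l = l' -> is_derive f t l'.
Proof. intros H ->; auto. Qed.
Lemma d_plus (f g : R -> R) (t : R) (a b : R) : is_derive f t a -> is_derive g t b -> is_derive (fun x => f x + g x) t (a + b).
Proof. intros; apply (is_derive_plus f g); auto. Qed.
Lemma d_minus (f g : R -> R) (t : R) (a b : R) : is_derive f t a -> is_derive g t b -> is_derive (fun x => f x - g x) t (a - b).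
Proof. intros; apply (is_derive_minus f g); auto. Qed.
Lemma d_opp (f : R -> R) (t : R) (a : R) : is_derive f t a -> is_derive (fun x => - f x) t (- a).
Proof. intros; apply (is_derive_opp f); auto. Qed.
Lemma d_mult (f g : R -> R) (t : R) (a b : R) : is_derive f t a -> is_derive g t b -> is_derive (fun x => f x * g x) t (a * g t + f t * b).
Proof. intros; apply (is_derive_mult f g); auto. intros; apply Rmult_comm. Qed.
Lemma d_const (c t : R) : is_derive (fun _ => c) t 0.
Proof. apply (is_derive_const (K:=R_AbsRing) (V:=R_NormedModule)). Qed.
Lemma d_id (t : R) : is_derive (fun x => x) t 1.
Proof. apply (is_derive_id (K:=R_AbsRing)). Qed.
Lemma d_div (f g : R -> R) (t : R) (a b : R) : is_derive f t a -> is_derive g t b -> g t <> 0 -> is_derive (fun x => f x / g x) t ((a * g t - f t * b) / g t ^ 2).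
Proof. intros; apply is_derive_div; auto. Qed.
Lemma d_inv (f : R -> R) (t : R) (a : R) : is_derive f t a -> f t <> 0 -> is_derive (fun x => / f x) t (- a / f t ^ 2).
Proof. intros; apply is_derive_inv; auto. Qed.
Lemma d_cos (f : R -> R) (t : R) (a : R) : is_derive f t a -> is_derive (fun x => cos (f x)) t (a * - sin (f t)).
Proof. intros. apply (is_derive_comp cos f). apply is_derive_Reals, derivable_pt_lim_cos. auto. Qed.
Lemma d_sin (f : R -> R) (t : R) (a : R) : is_derive f t a -> is_derive (fun x => sin (f x)) t (a * cos (f t)).
Proof. intros. apply (is_derive_comp sin f). apply is_derive_Reals, derivable_pt_lim_sin. auto. Qed.
Lemma d_cos' t : is_derive cos t (- sin t).
Proof. apply is_derive_Reals, derivable_pt_lim_cos. Qed.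
Lemma d_sin' t : is_derive sin t (cos t).
Proof. apply is_derive_Reals, derivable_pt_lim_sin. Qed.
Lemma d_pow2 (f : R -> R) (t : R) (a : R) : is_derive f t a -> is_derive (fun x => f x ^ 2) t (2 * a * f t).
Proof. intros H. change (is_derive (fun x => f x * (f x * 1)) t (2 * a * f t)).
  eapply d_eq. apply d_mult. exact H. apply (d_mult f (fun _ => 1)). exact H. apply d_const. simpl; ring. Qed.

Ltac der := repeat (match goal with
  | |- is_derive (fun _ => ?c) _ _ => apply d_const
  | |- is_derive (fun x => x) _ _ => apply d_id
  | |- is_derive (fun x => _ + _) _ _ => apply d_plus
  | |- is_derive (fun x => _ - _) _ _ => apply d_minus
  | |- is_derive (fun x => _ ^ 2) _ _ => apply d_pow2
  | |- is_derive (fun x => _ * _) _ _ => apply d_mult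
  | |- is_derive (fun x => _ / _) _ _ => apply d_div
  | |- is_derive (fun x => - _) _ _ => apply d_opp
  | |- is_derive (fun x => / _) _ _ => apply d_inv
  | |- is_derive (fun x => cos _) _ _ => apply d_cos
  | |- is_derive (fun x => sin _) _ _ => apply d_sin
  | |- is_derive cos _ _ => apply d_cos'
  | |- is_derive sin _ _ => apply d_sin'
  | H : forall t, is_derive ?f t _ |- is_derive ?f _ _ => apply H
  | H : forall t, is_derive ?f t _ |- is_derive (fun x => ?f x) _ _ => apply H
  end).


Definition per (f : R -> R) := forall t, f (t + 2 * PI) = f t.
Definition I (f : R -> R) : R := RInt f 0 (2 * PI).

Lemma exR (f : R -> R) a b : cont f -> ex_RInt f a b.
Proof. intros H. apply (ex_RInt_continuous (V:=R_CompleteNormedModule)). intros; apply H. Qed.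

Lemma RI_plus (f g : R -> R) a b : cont f -> cont g ->
  @eq R (RInt (fun x => f x + g x) a b) (RInt f a b + RInt g a b).
Proof. intros. apply (RInt_plus f g); apply exR; auto. Qed.
Lemma RI_minus (f g : R -> R) a b : cont f -> cont g ->
  @eq R (RInt (fun x => f x - g x) a b) (RInt f a b - RInt g a b).
Proof. intros. apply (RInt_minus f g); apply exR; auto. Qed.
Lemma RI_scal (f : R -> R) a b c : cont f -> @eq R (RInt (fun x => c * f x) a b) (c * RInt f a b).
Proof. intros; apply (RInt_scal f a b c). apply exR; auto. Qed.
Lemma RI_ext (f g : R -> R) a b : (forall x, f x = g x) -> @eq R (RInt f a b) (RInt g a b).
Proof. intros H; apply RInt_ext; intros; auto. Qed.
Lemma RI_const a b c : @eq R (RInt (fun _ => c) a b) ((b - a) * c).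
Proof. rewrite RInt_const. reflexivity. Qed.
Lemma RI_deriv (F f : R -> R) a b : (forall t, is_derive F t (f t)) -> cont f ->
  @eq R (RInt f a b) (F b - F a).
Proof. intros. apply is_RInt_unique. apply (is_RInt_derive F f); intros; auto. Qed.
Lemma RI_ge0 (f : R -> R) a b : a <= b -> cont f -> (forall t, 0 <= f t) -> 0 <= RInt f a b.
Proof. intros. apply RInt_ge_0; auto. apply exR; auto. Qed.
Lemma RI_le (f g : R -> R) a b : a <= b -> cont f -> cont g -> (forall t, f t <= g t) -> RInt f a b <= RInt g a b.
Proof. intros. apply RInt_le; auto; apply exR; auto. Qed.
Lemma RI_gt0 (f : R -> R) a b : a < b -> cont f -> (forall t, 0 < f t) -> 0 < RInt f a b.
Proof. intros. apply RInt_gt_0; auto. Qed.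
Lemma RI_chasles (f : R -> R) a b c : cont f -> @eq R (RInt f a b + RInt f b c) (RInt f a c).
Proof. intros. apply (RInt_Chasles f); apply exR; auto. Qed.

Lemma PI2_pos : 0 < 2 * PI.
Proof. pose proof PI_RGT_0; lra. Qed.

Lemma I_plus f g : cont f -> cont g -> I (fun x => f x + g x) = I f + I g.
Proof. apply RI_plus. Qed.
Lemma I_minus f g : cont f -> cont g -> I (fun x => f x - g x) = I f - I g.
Proof. apply RI_minus. Qed.
Lemma I_scal f c : cont f -> I (fun x => c * f x) = c * I f.
Proof. apply RI_scal. Qed.
Lemma I_ext f g : (forall x, f x = g x) -> I f = I g.
Proof. apply RI_ext. Qed.
Lemma I_const c : I (fun _ => c) = 2 * PI * c.
Proof. unfold I; rewrite RI_const. ring. Qed.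
Lemma I_ge0 f : cont f -> (forall t, 0 <= f t) -> 0 <= I f.
Proof. intros; apply RI_ge0; auto. pose proof PI2_pos; lra. Qed.
Lemma I_le f g : cont f -> cont g -> (forall t, f t <= g t) -> I f <= I g.
Proof. intros; apply RI_le; auto. pose proof PI2_pos; lra. Qed.
Lemma I_gt0 f : cont f -> (forall t, 0 < f t) -> 0 < I f.
Proof. intros; apply RI_gt0; auto. apply PI2_pos. Qed.
Lemma I_deriv0 (F f : R -> R) : per F -> (forall t, is_derive F t (f t)) -> cont f -> I f = 0.
Proof. intros Hp Hd Hc. unfold I. rewrite (RI_deriv F f); auto. rewrite <- (Rplus_0_l (2*PI)), Hp. ring. Qed.

Lemma per_deriv (F f : R -> R) : per F -> (forall t, is_derive F t (f t)) -> per f.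
Proof. intros Hp Hd t.
  assert (H : is_derive (fun x => F (x + 2 * PI)) t (f (t + 2 * PI))).
  { eapply d_eq. apply (is_derive_comp F (fun x => x + 2 * PI)). apply Hd.
    apply d_plus. apply d_id. apply d_const. simpl. unfold scal; simpl; unfold mult; simpl. ring. }
  assert (H2 : is_derive F t (f (t + 2 * PI))).
  { eapply is_derive_ext. 2: exact H. intros; simpl; apply Hp. }
  apply is_derive_unique in H2. pose proof (is_derive_unique _ _ _ (Hd t)). congruence.
Qed.

Lemma der_cont (g g1 : R -> R) : (forall t, is_derive g t (g1 t)) -> cont g.
Proof. intros Hd t. apply (ex_derive_continuous (K:=R_AbsRing) (V:=R_NormedModule) g t). exists (g1 t). apply Hd. Qed.

Ltac icont := first [intros ?t; cont | idtac].
Ltac ilin := repeat first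
  [ rewrite I_plus by (intros ?t; cont; auto)
  | rewrite I_minus by (intros ?t; cont; auto)
  | rewrite I_scal by (intros ?t; cont; auto) ].
Ltac ilin_in H := repeat first
  [ rewrite I_plus in H by (intros ?t; cont; auto)
  | rewrite I_minus in H by (intros ?t; cont; auto)
  | rewrite I_scal in H by (intros ?t; cont; auto) ].

Lemma per_sin : per sin.
Proof. intros t. rewrite sin_plus, sin_2PI, cos_2PI. ring. Qed.
Lemma per_cos : per cos.
Proof. intros t. rewrite cos_plus, sin_2PI, cos_2PI. ring. Qed.

Lemma I_cos : I (fun x => cos x) = 0.
Proof. apply (I_deriv0 sin). apply per_sin. intros; apply d_sin'. intros t; cont. Qed.
Lemma I_sin : I (fun x => sin x) = 0.
Proof. apply (I_deriv0 (fun x => - cos x)). intros t; rewrite per_cos; auto.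
  intros; eapply d_eq. der. ring. intros t; cont. Qed.
Lemma I_sincos : I (fun x => sin x * cos x) = 0.
Proof. apply (I_deriv0 (fun x => sin x ^ 2 / 2)). intros t; rewrite per_sin; auto.
  intros; eapply d_eq. der. lra. simpl; field. intros t; cont. Qed.
Lemma I_cos2 : I (fun x => cos x ^ 2) = PI.
Proof.
  assert (H1 : I (fun x => cos x ^ 2 - sin x ^ 2) = 0).
  { apply (I_deriv0 (fun x => sin x * cos x)). intros t; rewrite per_sin, per_cos; auto.
    intros; eapply d_eq. der. simpl; ring. intros t; cont. }
  assert (H2 : I (fun x => cos x ^ 2 + sin x ^ 2) = 2 * PI).
  { rewrite (I_ext _ (fun _ => 1)). rewrite I_const; ring. intros x. pose proof (sin2_cos2 x) as E. unfold Rsqr in E. simpl. lra. }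
  ilin_in H1; ilin_in H2. lra.
Qed.
Lemma I_sin2 : I (fun x => sin x ^ 2) = PI.
Proof.
  assert (H2 : I (fun x => cos x ^ 2 + sin x ^ 2) = 2 * PI).
  { rewrite (I_ext _ (fun _ => 1)). rewrite I_const; ring. intros x. pose proof (sin2_cos2 x) as E. unfold Rsqr in E. simpl. lra. }
  ilin_in H2. rewrite I_cos2 in H2. lra.
Qed.
Lemma I_cos_e : I cos = 0.
Proof. exact I_cos. Qed.
Lemma I_sin_e : I sin = 0.
Proof. exact I_sin. Qed.
Lemma I_const0 (c : R) : I (fun _ => c) = 2 * PI * c.
Proof. apply I_const. Qed.

Lemma shift_int (F : R -> R) a : per F -> cont F -> @eq R (RInt F a (a + 2 * PI)) (I F).
Proof.
  intros Hp Hc. unfold I.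
  rewrite <- (RI_chasles F a 0 (a + 2 * PI)) by auto.
  rewrite <- (RI_chasles F 0 (2 * PI) (a + 2 * PI)) by auto.
  assert (E : @eq R (RInt F (2 * PI) (a + 2 * PI)) (RInt F 0 a)).
  { pose proof (RInt_comp_lin F 1 (2 * PI) 0 a) as H.
    replace (1 * 0 + 2 * PI) with (2 * PI) in H by ring.
    replace (1 * a + 2 * PI) with (a + 2 * PI) in H by ring.
    rewrite <- H by (apply exR; auto).
    apply RI_ext. intros x. unfold scal; simpl; unfold mult; simpl. rewrite !Rmult_1_l, Hp. reflexivity. }
  rewrite E.
  assert (E2 : @eq R (RInt F a 0 + RInt F 0 a) 0).
  { rewrite RI_chasles by auto. rewrite RInt_point. reflexivity. }
  lra.
Qed.

Lemma lim_r (X Y : R) : (forall r, 0 < r < 1 -> r * X <= Y) -> X <= Y.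
Proof.
  intros H. destruct (Rle_lt_dec X Y) as [|Hlt]; auto. exfalso.
  destruct (Rle_lt_dec X 0).
  - specialize (H (1/2) ltac:(lra)). lra.
  - destruct (Rle_lt_dec Y 0).
    + specialize (H (1/2) ltac:(lra)). lra.
    + specialize (H ((1 + Y / X) / 2)).
      assert (0 < Y / X < 1). { assert (Ey : Y = Y / X * X) by (field; lra). split. apply Rdiv_lt_0_compat; lra. nra. }
      specialize (H ltac:(lra)).
      assert (E : (1 + Y / X) / 2 * X = (X + Y) / 2) by (field; lra). lra.
Qed.

Lemma dirichlet (g g1 : R -> R) s T k :
  0 < T -> 0 < k -> k * T <= PI ->
  (forall t, is_derive g t (g1 t)) -> cont g1 -> g s = 0 -> g (s + T) = 0 ->
  k ^ 2 * RInt (fun x => g x ^ 2) s (s + T) <= RInt (fun x => g1 x ^ 2) s (s + T).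
Proof.
  intros HT Hk HkT Hd Hc Hs HsT.
  assert (Hgc : cont g) by (apply (der_cont g g1); auto).
  apply lim_r. intros r Hr.
  set (m := k * sqrt r). set (c := s + T / 2).
  assert (Hm : 0 < m) by (unfold m; apply Rmult_lt_0_compat; auto; apply sqrt_lt_R0; lra).
  assert (Hm2 : m ^ 2 = r * k ^ 2). { unfold m. rewrite Rpow_mult_distr. rewrite pow2_sqrt by lra. ring. }
  assert (Hsr : sqrt r < 1). { rewrite <- sqrt_1. apply sqrt_lt_1; lra. }
  assert (Hcos : forall x, s <= x <= s + T -> 0 < cos (m * (x - c))).
  { intros x Hx. apply cos_gt_0.
    - assert (0 <= m * (x - c + T/2)) by (apply Rmult_le_pos; unfold c in *; lra).
      assert (m * (T / 2) < PI / 2). { unfold m. assert (k * T * sqrt r < PI). { pose proof PI_RGT_0. assert (0 < k * T) by nra. assert (k*T*sqrt r < k * T * 1) by (apply Rmult_lt_compat_l; lra). lra. } lra. }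
      lra.
    - assert (0 <= m * (c + T/2 - x)) by (apply Rmult_le_pos; unfold c in *; lra).
      assert (m * (T / 2) < PI / 2). { unfold m. assert (k * T * sqrt r < PI). { pose proof PI_RGT_0. assert (0 < k * T) by nra. assert (k*T*sqrt r < k * T * 1) by (apply Rmult_lt_compat_l; lra). lra. } lra. }
      lra. }
  set (H := fun x => - m * (g x ^ 2 * sin (m * (x - c)) / cos (m * (x - c)))).
  set (dH := fun x => - m * ((2 * g1 x * g x * sin (m * (x - c)) + g x ^ 2 * (m * cos (m * (x - c)))) * cos (m * (x - c)) - g x ^ 2 * sin (m * (x - c)) * (m * - sin (m * (x - c)))) / cos (m * (x - c)) ^ 2).
  assert (HdH : forall x, s <= x <= s + T -> is_derive H x (dH x)).
  { intros x Hx. specialize (Hcos x Hx). unfold H, dH. eapply d_eq. der.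
    apply Rgt_not_eq; lra. simpl. field. apply Rgt_not_eq; lra. }
  assert (HcH : forall x, s <= x <= s + T -> continuous dH x).
  { intros x Hx. specialize (Hcos x Hx). unfold dH. cont. apply pow_nonzero. lra. }
  assert (HI : is_RInt dH s (s + T) (minus (H (s + T)) (H s))).
  { apply (is_RInt_derive (V:=R_CompleteNormedModule) H dH); intros x Hx; rewrite Rmin_left, Rmax_right in Hx by lra; auto. }
  assert (H0 : minus (H (s + T)) (H s) = 0).
  { unfold H, minus, plus, opp; simpl. rewrite Hs, HsT. field. split; apply Rgt_not_eq; apply Hcos; lra. }
  rewrite H0 in HI.
  assert (Hle : RInt dH s (s + T) <= RInt (fun x => g1 x ^ 2 - m ^ 2 * g x ^ 2) s (s + T)).
  { apply RInt_le. lra. exists 0. exact HI. apply exR. intros t. cont.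
    intros x Hx. assert (Hc' : 0 < cos (m * (x - c))) by (apply Hcos; lra).
    assert (E : g1 x ^ 2 - m ^ 2 * g x ^ 2 - dH x = (g1 x + m * g x * sin (m * (x - c)) / cos (m * (x - c))) ^ 2).
    { unfold dH. field. lra. }
    pose proof (pow2_ge_0 (g1 x + m * g x * sin (m * (x - c)) / cos (m * (x - c)))). lra. }
  apply (is_RInt_unique (V:=R_CompleteNormedModule)) in HI. rewrite HI in Hle.
  rewrite RI_minus in Hle by (intros t; cont).
  rewrite RI_scal in Hle by (intros t; cont).
  rewrite Hm2 in Hle. lra.
Qed.

Lemma ivt_anti (psi : R -> R) a b : a < b -> cont psi -> psi b = - psi a ->
  exists x, a <= x <= b /\ psi x = 0.
Proof.
  intros Hab Hc He.
  assert (Hcp : continuity psi). { intros x. apply continuity_pt_filterlim. apply Hc. }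
  destruct (Rtotal_order (psi a) 0) as [Hn|[Hz|Hp]].
  - destruct (IVT psi a b Hcp Hab Hn) as [x Hx]. lra. exists x; auto.
  - exists a; split; auto; lra.
  - assert (Hcp' : continuity (fun x => - psi x)). { apply continuity_opp; auto. }
    destruct (IVT (fun x => - psi x) a b Hcp' Hab) as [x [Hx1 Hx2]]; try lra.
    exists x; split; auto; lra.
Qed.

Lemma per_sq (g : R -> R) : per g -> per (fun x => g x ^ 2).
Proof. intros H t; simpl; rewrite H; auto. Qed.

Lemma W1 (g g1 : R -> R) : per g -> (forall t, is_derive g t (g1 t)) -> cont g1 -> I g = 0 ->
  I (fun x => g x ^ 2) <= I (fun x => g1 x ^ 2).
Proof.
  intros Hp Hd Hc1 H0.
  assert (Hgc : cont g) by (apply (der_cont g g1); auto).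
  assert (Hp1 : per g1) by (apply (per_deriv g g1); auto).
  pose proof PI_RGT_0 as Hpi.
  destruct (ivt_anti (fun t => g t - g (t + PI)) 0 PI) as [a [Ha Hz]]; auto.
  { intros t; cont. }
  { replace (PI + PI) with (0 + 2 * PI) by ring. rewrite Hp. rewrite Rplus_0_l. ring. }
  set (c := g a). set (h := fun x => g x - c).
  assert (Hdh : forall t, is_derive h t (g1 t)).
  { intros t; unfold h; eapply d_eq. der. ring. }
  assert (Hph : per h). { intros t; unfold h; rewrite Hp; auto. }
  assert (Hhc : cont h) by (apply (der_cont h g1); auto).
  pose proof (dirichlet h g1 a PI 1 Hpi ltac:(lra) ltac:(lra) Hdh Hc1) as D1.
  pose proof (dirichlet h g1 (a + PI) PI 1 Hpi ltac:(lra) ltac:(lra) Hdh Hc1) as D2.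
  assert (E1 : h a = 0) by (unfold h, c; ring).
  assert (E2 : h (a + PI) = 0) by (unfold h, c; lra).
  assert (E3 : h (a + PI + PI) = 0).
  { unfold h, c. replace (a + PI + PI) with (a + 2 * PI) by ring. rewrite Hp. ring. }
  specialize (D1 E1 E2). specialize (D2 E2 E3).
  rewrite pow1, Rmult_1_l in D1, D2.
  assert (Hs : @eq R (RInt (fun x => h x ^ 2) a (a + PI) + RInt (fun x => h x ^ 2) (a + PI) (a + PI + PI)) (I (fun x => h x ^ 2))).
  { rewrite RI_chasles by (intros t; cont). replace (a + PI + PI) with (a + 2 * PI) by ring.
    apply shift_int. apply per_sq; auto. intros t; cont. }
  assert (Hs1 : @eq R (RInt (fun x => g1 x ^ 2) a (a + PI) + RInt (fun x => g1 x ^ 2) (a + PI) (a + PI + PI)) (I (fun x => g1 x ^ 2))).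
  { rewrite RI_chasles by (intros t; cont). replace (a + PI + PI) with (a + 2 * PI) by ring.
    apply shift_int. apply per_sq; auto. intros t; cont. }
  assert (Eh : I (fun x => h x ^ 2) = I (fun x => g x ^ 2) + 2 * PI * c ^ 2).
  { rewrite (I_ext _ (fun x => g x ^ 2 - (2 * c) * g x + c ^ 2)) by (intros; unfold h; ring).
    ilin. rewrite H0, I_const. ring. }
  assert (0 <= 2 * PI * c ^ 2) by (pose proof (pow2_ge_0 c); nra).
  lra.
Qed.

Lemma ibp_sin (g g1 : R -> R) : per g -> (forall t, is_derive g t (g1 t)) -> cont g1 ->
  I (fun x => g1 x * sin x) = - I (fun x => g x * cos x).
Proof.
  intros Hp Hd Hc. assert (Hgc : cont g) by (apply (der_cont g g1); auto).
  assert (H : I (fun x => g1 x * sin x + g x * cos x) = 0).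
  { apply (I_deriv0 (fun x => g x * sin x)). intros t; rewrite Hp, per_sin; auto.
    intros t; eapply d_eq. der. ring. intros t; cont. }
  ilin_in H. lra.
Qed.
Lemma ibp_cos (g g1 : R -> R) : per g -> (forall t, is_derive g t (g1 t)) -> cont g1 ->
  I (fun x => g1 x * cos x) = I (fun x => g x * sin x).
Proof.
  intros Hp Hd Hc. assert (Hgc : cont g) by (apply (der_cont g g1); auto).
  assert (H : I (fun x => g1 x * cos x - g x * sin x) = 0).
  { apply (I_deriv0 (fun x => g x * cos x)). intros t; rewrite Hp, per_cos; auto.
    intros t; eapply d_eq. der. ring. intros t; cont. }
  ilin_in H. lra.
Qed.

Lemma sum4 (f : R -> R) a : cont f -> per f ->
  @eq R (RInt f a (a + PI / 2) + RInt f (a + PI / 2) (a + PI / 2 + PI / 2)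
  + RInt f (a + PI / 2 + PI / 2) (a + PI / 2 + PI / 2 + PI / 2)
  + RInt f (a + PI / 2 + PI / 2 + PI / 2) (a + PI / 2 + PI / 2 + PI / 2 + PI / 2)) (I f).
Proof.
  intros Hc Hp. rewrite !RI_chasles by auto.
  replace (a + PI / 2 + PI / 2 + PI / 2 + PI / 2) with (a + 2 * PI) by field.
  apply shift_int; auto.
Qed.

Lemma W2 (g g1 : R -> R) : per g -> (forall t, is_derive g t (g1 t)) -> cont g1 ->
  I g = 0 -> I (fun x => g x * cos x) = 0 -> I (fun x => g x * sin x) = 0 ->
  4 * I (fun x => g x ^ 2) <= I (fun x => g1 x ^ 2).
Proof.
  intros Hp Hd Hc1 H0 Hcos Hsin.
  assert (Hgc : cont g) by (apply (der_cont g g1); auto).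
  assert (Hp1 : per g1) by (apply (per_deriv g g1); auto).
  pose proof PI_RGT_0 as Hpi.
  destruct (ivt_anti (fun t => g t - g (t + PI / 2) + g (t + PI / 2 + PI / 2) - g (t + PI / 2 + PI / 2 + PI / 2)) 0 (PI / 2)) as [a [Ha Hz]]; auto.
  { lra. }
  { intros t; cont. }
  { replace (PI / 2 + PI / 2 + PI / 2 + PI / 2) with (0 + 2 * PI) by field. rewrite Hp.
    rewrite !Rplus_0_l. ring. }
  set (C := cos a). set (S := sin a).
  set (g0 := g a). set (g1' := g (a + PI / 2)). set (g2 := g (a + PI / 2 + PI / 2)).
  set (g3 := g (a + PI / 2 + PI / 2 + PI / 2)).
  set (c := (g0 + g1' + g2 + g3) / 4). set (P := (g0 - g2) / 2). set (Q := (g1' - g3) / 2).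
  set (al := P * C - Q * S). set (be := P * S + Q * C).
  set (h := fun x => g x - c - al * cos x - be * sin x).
  set (h1 := fun x => g1 x + al * sin x - be * cos x).
  assert (HCS : S ^ 2 + C ^ 2 = 1). { unfold S, C. pose proof (sin2_cos2 a) as E. unfold Rsqr in E. simpl. lra. }
  assert (Hdh : forall t, is_derive h t (h1 t)).
  { intros t; unfold h, h1; eapply d_eq. der. cbv beta. ring. }
  assert (Hc1h : cont h1) by (intros t; unfold h1; cont).
  assert (Hph : per h). { intros t; unfold h; rewrite Hp, per_cos, per_sin; auto. }
  assert (Hph1 : per h1). { intros t; unfold h1; rewrite Hp1, per_cos, per_sin; auto. }
  assert (Hhc : cont h) by (apply (der_cont h h1); auto).
  assert (Hk : 0 < PI / 2) by lra.
  pose proof (dirichlet h h1 a (PI / 2) 2 Hk ltac:(lra) ltac:(lra) Hdh Hc1h) as D1.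
  pose proof (dirichlet h h1 (a + PI / 2) (PI / 2) 2 Hk ltac:(lra) ltac:(lra) Hdh Hc1h) as D2.
  pose proof (dirichlet h h1 (a + PI / 2 + PI / 2) (PI / 2) 2 Hk ltac:(lra) ltac:(lra) Hdh Hc1h) as D3.
  pose proof (dirichlet h h1 (a + PI / 2 + PI / 2 + PI / 2) (PI / 2) 2 Hk ltac:(lra) ltac:(lra) Hdh Hc1h) as D4.
  assert (Ec1 : cos (a + PI / 2) = - S) by (rewrite cos_plus, cos_PI2, sin_PI2; unfold S; ring).
  assert (Es1 : sin (a + PI / 2) = C) by (rewrite sin_plus, cos_PI2, sin_PI2; unfold C; ring).
  assert (Ec2 : cos (a + PI / 2 + PI / 2) = - C) by (rewrite cos_plus, cos_PI2, sin_PI2, Es1; ring).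
  assert (Es2 : sin (a + PI / 2 + PI / 2) = - S) by (rewrite sin_plus, cos_PI2, sin_PI2, Ec1; ring).
  assert (Ec3 : cos (a + PI / 2 + PI / 2 + PI / 2) = S) by (rewrite cos_plus, cos_PI2, sin_PI2, Es2; ring).
  assert (Es3 : sin (a + PI / 2 + PI / 2 + PI / 2) = - C) by (rewrite sin_plus, cos_PI2, sin_PI2, Ec2; ring).
  assert (Hz' : g0 - g1' + g2 - g3 = 0) by (unfold g0, g1', g2, g3; lra).
  assert (HP : P * S ^ 2 + P * C ^ 2 = P) by (rewrite <- Rmult_plus_distr_l, HCS; ring).
  assert (HQ : Q * S ^ 2 + Q * C ^ 2 = Q) by (rewrite <- Rmult_plus_distr_l, HCS; ring).
  assert (E0 : h a = 0).
  { unfold h. fold C S g0. transitivity (g0 - c - (P * S ^ 2 + P * C ^ 2)). unfold al, be; ring. rewrite HP. unfold c, P. lra. }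
  assert (E1 : h (a + PI / 2) = 0).
  { unfold h. rewrite Ec1, Es1. fold g1'. transitivity (g1' - c - (Q * S ^ 2 + Q * C ^ 2)). unfold al, be; ring. rewrite HQ. unfold c, Q. lra. }
  assert (E2 : h (a + PI / 2 + PI / 2) = 0).
  { unfold h. rewrite Ec2, Es2. fold g2. transitivity (g2 - c + (P * S ^ 2 + P * C ^ 2)). unfold al, be; ring. rewrite HP. unfold c, P. lra. }
  assert (E3 : h (a + PI / 2 + PI / 2 + PI / 2) = 0).
  { unfold h. rewrite Ec3, Es3. fold g3. transitivity (g3 - c + (Q * S ^ 2 + Q * C ^ 2)). unfold al, be; ring. rewrite HQ. unfold c, Q. lra. }
  assert (E4 : h (a + PI / 2 + PI / 2 + PI / 2 + PI / 2) = 0).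
  { replace (a + PI / 2 + PI / 2 + PI / 2 + PI / 2) with (a + 2 * PI) by field. rewrite Hph. exact E0. }
  specialize (D1 E0 E1). specialize (D2 E1 E2). specialize (D3 E2 E3). specialize (D4 E3 E4).
  pose proof (sum4 (fun x => h x ^ 2) a ltac:(intros t; cont) (per_sq h Hph)) as S1.
  pose proof (sum4 (fun x => h1 x ^ 2) a ltac:(intros t; cont) (per_sq h1 Hph1)) as S2.
  assert (Main : 4 * I (fun x => h x ^ 2) <= I (fun x => h1 x ^ 2)).
  { rewrite <- S1, <- S2. replace (2 ^ 2) with 4 in * by ring. lra. }
  pose proof (ibp_sin g g1 Hp Hd Hc1) as Ib1. pose proof (ibp_cos g g1 Hp Hd Hc1) as Ib2.
  assert (Eh1 : I (fun x => h1 x ^ 2) = I (fun x => g1 x ^ 2) + PI * (al ^ 2 + be ^ 2)).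
  { rewrite (I_ext _ (fun x => g1 x ^ 2 + (2 * al) * (g1 x * sin x) - (2 * be) * (g1 x * cos x)
       + al ^ 2 * sin x ^ 2 + be ^ 2 * cos x ^ 2 - (2 * al * be) * (sin x * cos x))) by (intros; unfold h1; ring).
    ilin. rewrite Ib1, Ib2, Hcos, Hsin, I_sin2, I_cos2, I_sincos. ring. }
  assert (Eh : I (fun x => h x ^ 2) = I (fun x => g x ^ 2) + 2 * PI * c ^ 2 + PI * (al ^ 2 + be ^ 2)).
  { rewrite (I_ext _ (fun x => g x ^ 2 + c ^ 2 + al ^ 2 * cos x ^ 2 + be ^ 2 * sin x ^ 2
       - (2 * c) * g x - (2 * al) * (g x * cos x) - (2 * be) * (g x * sin x)
       + (2 * c * al) * cos x + (2 * c * be) * sin x + (2 * al * be) * (sin x * cos x))) by (intros; unfold h; ring).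
    ilin. rewrite H0, Hcos, Hsin, I_sin2, I_cos2, I_sincos, ?I_cos, ?I_sin, ?I_cos_e, ?I_sin_e, I_const. ring. }
  assert (0 <= PI * (al ^ 2 + be ^ 2)) by (pose proof (pow2_ge_0 al); pose proof (pow2_ge_0 be); nra).
  assert (0 <= 2 * PI * c ^ 2) by (pose proof (pow2_ge_0 c); nra).
  lra.
Qed.

Definition C2t (f f1 f2 : R -> R) :=
  (forall t, is_derive f t (f1 t)) /\ (forall t, is_derive f1 t (f2 t)) /\ cont f2.

Lemma C2t_of (h : R -> R) : C2_S1 h -> C2t h (Derive h) (Derive (Derive h)).
Proof.
  intros [Hp [H1 [H2 H3]]]. split; [|split].
  - intros t. apply Derive_correct. auto.
  - intros t. apply Derive_correct. auto.
  - intros t. apply H3.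
Qed.

Lemma C2t_D1 f f1 f2 : C2t f f1 f2 -> Derive f = f1.
Proof. intros [H _]. apply functional_extensionality. intros t. apply is_derive_unique. auto. Qed.
Lemma C2t_D2 f f1 f2 : C2t f f1 f2 -> Derive (Derive f) = f2.
Proof. intros HC. rewrite (C2t_D1 f f1 f2 HC). destruct HC as [_ [H _]].
  apply functional_extensionality. intros t. apply is_derive_unique. auto. Qed.

Lemma C2t_S1 f f1 f2 : per f -> C2t f f1 f2 -> C2_S1 f.
Proof.
  intros Hp HC. pose proof (C2t_D1 _ _ _ HC) as E1. pose proof (C2t_D2 _ _ _ HC) as E2.
  destruct HC as [H1 [H2 H3]]. split; [|split; [|split]].
  - apply Hp.
  - intros t. exists (f1 t). auto.
  - intros t. rewrite E1. exists (f2 t). auto.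
  - intros t. rewrite E2. apply H3.
Qed.

Lemma C2t_cont1 f f1 f2 : C2t f f1 f2 -> cont f1.
Proof. intros [_ [H _]]. apply (der_cont f1 f2). auto. Qed.
Lemma C2t_cont0 f f1 f2 : C2t f f1 f2 -> cont f.
Proof. intros [H _]. apply (der_cont f f1). auto. Qed.

Lemma D2_eq f f1 f2 : C2t f f1 f2 -> forall t, D2 f t = f2 t + f t.
Proof. intros HC t. unfold D2. rewrite (C2t_D2 _ _ _ HC). reflexivity. Qed.

Lemma speed_eq h : body_Kplus2 h -> forall t, bd_speed h t = D2 h t.
Proof.
  intros [HC2 [Hpos Hq]] t. pose proof (C2t_of h HC2) as HC. destruct HC as [H1 [H2 H3]].
  assert (E1 : Derive (bdX1 h) t = - D2 h t * sin t).
  { apply is_derive_unique. unfold bdX1, D2. eapply d_eq. der. cbv beta. ring. }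
  assert (E2 : Derive (bdX2 h) t = D2 h t * cos t).
  { apply is_derive_unique. unfold bdX2, D2. eapply d_eq. der. cbv beta. ring. }
  unfold bd_speed. rewrite E1, E2.
  replace ((- D2 h t * sin t) ^ 2 + (D2 h t * cos t) ^ 2) with (D2 h t ^ 2).
  - rewrite <- Rsqr_pow2. apply sqrt_Rsqr. specialize (Hq t). lra.
  - pose proof (sin2_cos2 t) as E. unfold Rsqr in E. transitivity (D2 h t ^ 2 * (sin t * sin t + cos t * cos t)).
    rewrite E; ring. ring.
Qed.

Lemma bd_int_eq h f : body_Kplus2 h -> bd_integral h f = I (fun t => f t * D2 h t).
Proof. intros Hb. unfold bd_integral. apply RI_ext. intros x. rewrite speed_eq; auto. Qed.

Lemma I_pos_pt (g : R -> R) t0 : cont g -> per g -> (forall t, 0 <= g t) -> 0 < g t0 -> 0 < I g.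
Proof.
  intros Hc Hp Hn H0. pose proof PI_RGT_0 as Hpi.
  rewrite <- (shift_int g (t0 - PI)) by auto.
  assert (Hcp : continuity_pt g t0) by (apply continuity_pt_filterlim; apply Hc).
  destruct (Hcp (g t0 / 2) ltac:(lra)) as [alp [Halp Hx]].
  set (d := Rmin (alp / 2) (PI / 2)).
  assert (Hd0 : 0 < d) by (unfold d; apply Rmin_glb_lt; lra).
  assert (Hd1 : d <= alp / 2) by apply Rmin_l.
  assert (Hd2 : d <= PI / 2) by apply Rmin_r.
  assert (Hnear : forall x, t0 - d < x < t0 + d -> g t0 / 2 <= g x).
  { intros x Hxr. destruct (Req_dec x t0) as [->|Hne]. lra.
    assert (Hd : Rdist (g x) (g t0) < g t0 / 2).
    { apply (Hx x). split. split. exact Logic.I. auto. simpl. unfold Rdist. apply Rabs_def1; lra. }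
    unfold Rdist in Hd. apply Rabs_def2 in Hd. lra. }
  rewrite <- (RI_chasles g (t0 - PI) (t0 - d) (t0 - PI + 2 * PI)) by auto.
  rewrite <- (RI_chasles g (t0 - d) (t0 + d) (t0 - PI + 2 * PI)) by auto.
  assert (A1 : 0 <= RInt g (t0 - PI) (t0 - d)) by (apply RI_ge0; auto; lra).
  assert (A3 : 0 <= RInt g (t0 + d) (t0 - PI + 2 * PI)) by (apply RI_ge0; auto; lra).
  assert (A2 : RInt (fun _ => g t0 / 2) (t0 - d) (t0 + d) <= RInt g (t0 - d) (t0 + d)).
  { apply RInt_le. lra. apply exR. intros t; cont. apply exR; auto.
    intros x Hxr. apply Hnear. lra. }
  rewrite RI_const in A2. assert (0 < (t0 + d - (t0 - d)) * (g t0 / 2)) by (apply Rmult_lt_0_compat; lra).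
  lra.
Qed.

Lemma quad_cs a b c : 0 <= a -> (forall s, 0 <= a * s ^ 2 - 2 * b * s + c) -> b ^ 2 <= a * c.
Proof.
  intros Ha H. destruct (Rle_lt_or_eq_dec 0 a Ha) as [Hp|Hz].
  - specialize (H (b / a)).
    assert (E : a * (b / a) ^ 2 - 2 * b * (b / a) + c = (a * c - b ^ 2) / a) by (field; lra).
    rewrite E in H. assert (0 <= a * c - b ^ 2).
    { apply (Rmult_le_reg_r (/ a)). apply Rinv_0_lt_compat; lra. rewrite Rmult_0_l. exact H. }
    lra.
  - subst a. destruct (Req_dec b 0) as [->|Hb]. lra.
    specialize (H ((c + 1) / (2 * b))).
    assert (E : 0 * ((c + 1) / (2 * b)) ^ 2 - 2 * b * ((c + 1) / (2 * b)) + c = -1) by (field; lra).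
    lra.
Qed.

Lemma CS_int (u v rho : R -> R) : cont u -> cont v -> cont rho -> (forall t, 0 <= rho t) ->
  I (fun t => u t * v t * rho t) ^ 2 <= I (fun t => u t ^ 2 * rho t) * I (fun t => v t ^ 2 * rho t).
Proof.
  intros Hu Hv Hr Hn. apply quad_cs.
  - apply I_ge0. intros t; cont. intros t. apply Rmult_le_pos; auto. apply pow2_ge_0.
  - intros s.
    assert (E : I (fun t => (v t - s * u t) ^ 2 * rho t) =
      I (fun t => u t ^ 2 * rho t) * s ^ 2 - 2 * I (fun t => u t * v t * rho t) * s + I (fun t => v t ^ 2 * rho t)).
    { rewrite (I_ext _ (fun t => (s ^ 2) * (u t ^ 2 * rho t) - (2 * s) * (u t * v t * rho t) + v t ^ 2 * rho t))
        by (intros; ring).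
      ilin. ring. }
    rewrite <- E. apply I_ge0. intros t; cont. intros t. apply Rmult_le_pos; auto. apply pow2_ge_0.
Qed.

Lemma Minkowski (hK k1 k2 f f1 f2 : R -> R) :
  C2t hK k1 k2 -> per hK -> (forall t, 0 < hK t) -> (forall t, 0 < k2 t + hK t) ->
  C2t f f1 f2 -> per f -> I (fun t => f t * (k2 t + hK t)) = 0 ->
  I (fun t => f t * (f2 t + f t)) <= 0.
Proof.
  intros HK HpK Hpos Hq HF Hpf Horth.
  pose proof (C2t_cont0 _ _ _ HK) as ChK. pose proof (C2t_cont1 _ _ _ HK) as Ck1.
  pose proof (C2t_cont0 _ _ _ HF) as Cf. pose proof (C2t_cont1 _ _ _ HF) as Cf1.
  destruct HK as [DK1 [DK2 Ck2]]. destruct HF as [DF1 [DF2 Cf2]].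
  assert (Pk1 : per k1) by (apply (per_deriv hK k1); auto).
  assert (Pf1 : per f1) by (apply (per_deriv f f1); auto).
  assert (J1 : I (fun t => f1 t ^ 2 + f t * f2 t) = 0).
  { apply (I_deriv0 (fun t => f t * f1 t)). intros t; rewrite Hpf, Pf1; auto.
    intros t; eapply d_eq. der. cbv beta; ring. intros t; cont. }
  assert (J2 : I (fun t => f1 t * k1 t + f t * k2 t) = 0).
  { apply (I_deriv0 (fun t => f t * k1 t)). intros t; rewrite Hpf, Pk1; auto.
    intros t; eapply d_eq. der. cbv beta; ring. intros t; cont. }
  assert (J3 : I (fun t => k1 t ^ 2 + hK t * k2 t) = 0).
  { apply (I_deriv0 (fun t => hK t * k1 t)). intros t; rewrite HpK, Pk1; auto.
    intros t; eapply d_eq. der. cbv beta; ring. intros t; cont. }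
  assert (HT : 0 < I hK) by (apply I_gt0; auto).
  set (s := I f / I hK).
  set (g := fun t => f t - s * hK t). set (g1 := fun t => f1 t - s * k1 t).
  assert (HW : I (fun x => g x ^ 2) <= I (fun x => g1 x ^ 2)).
  { apply W1.
    - intros t; unfold g; rewrite Hpf, HpK; auto.
    - intros t; unfold g, g1; eapply d_eq. der. cbv beta; ring.
    - intros t; unfold g1; cont.
    - unfold g. ilin. unfold s. field. lra. }
  assert (Eg : I (fun x => g x ^ 2) = I (fun t => f t ^ 2) - 2 * s * I (fun t => f t * hK t) + s ^ 2 * I (fun t => hK t ^ 2)).
  { rewrite (I_ext _ (fun t => f t ^ 2 - (2 * s) * (f t * hK t) + (s ^ 2) * hK t ^ 2)) by (intros; unfold g; ring).
    ilin. ring. }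
  assert (Eg1 : I (fun x => g1 x ^ 2) = I (fun t => f1 t ^ 2) - 2 * s * I (fun t => f1 t * k1 t) + s ^ 2 * I (fun t => k1 t ^ 2)).
  { rewrite (I_ext _ (fun t => f1 t ^ 2 - (2 * s) * (f1 t * k1 t) + (s ^ 2) * k1 t ^ 2)) by (intros; unfold g1; ring).
    ilin. ring. }
  assert (Eo : I (fun t => f t * (k2 t + hK t)) = I (fun t => f t * k2 t) + I (fun t => f t * hK t)).
  { rewrite (I_ext _ (fun t => f t * k2 t + f t * hK t)) by (intros; ring). ilin. reflexivity. }
  assert (Tq : 0 <= I (fun t => k2 t * hK t + hK t ^ 2)).
  { apply I_ge0. intros t; cont. intros t. specialize (Hq t). specialize (Hpos t).
    replace (k2 t * hK t + hK t ^ 2) with ((k2 t + hK t) * hK t) by ring. nra. }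
  ilin_in J1. ilin_in J2. ilin_in J3. ilin_in Tq.
  rewrite (I_ext (fun t => f t * (f2 t + f t)) (fun t => f t * f2 t + f t ^ 2)) by (intros; ring).
  ilin.
  rewrite (I_ext (fun t => k2 t * hK t) (fun t => hK t * k2 t)) in Tq by (intros; ring).
  assert (0 <= s ^ 2 * (I (fun t => hK t * k2 t) + I (fun t => hK t ^ 2))) by (apply Rmult_le_pos; [apply pow2_ge_0| lra]).
  nra.
Qed.

Lemma C2t_div (f f1 f2 g g1 g2 : R -> R) : C2t f f1 f2 -> C2t g g1 g2 -> (forall t, g t <> 0) ->
  C2t (fun t => f t / g t) (fun t => (f1 t * g t - f t * g1 t) / g t ^ 2)
    (fun t => ((f2 t * g t - f t * g2 t) * g t ^ 2 - (f1 t * g t - f t * g1 t) * (2 * g1 t * g t)) / (g t ^ 2) ^ 2).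
Proof.
  intros HF HG Hn.
  pose proof (C2t_cont0 _ _ _ HF) as Cf. pose proof (C2t_cont1 _ _ _ HF) as Cf1.
  pose proof (C2t_cont0 _ _ _ HG) as Cg. pose proof (C2t_cont1 _ _ _ HG) as Cg1.
  destruct HF as [DF1 [DF2 Cf2]]. destruct HG as [DG1 [DG2 Cg2]].
  split; [|split].
  - intros t. eapply d_eq. der. auto. reflexivity.
  - intros t. eapply d_eq. der. apply pow_nonzero; auto. cbv beta. field. auto.
  - intros t. cont. apply pow_nonzero, pow_nonzero; auto.
Qed.

Lemma gram_pos (rho : R -> R) : cont rho -> per rho -> (forall t, 0 < rho t) ->
  0 < I (fun t => cos t ^ 2 * rho t) * I (fun t => sin t ^ 2 * rho t) - I (fun t => cos t * sin t * rho t) ^ 2.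
Proof.
  intros Hc Hp Hpos.
  set (g11 := I (fun t => cos t ^ 2 * rho t)). set (g22 := I (fun t => sin t ^ 2 * rho t)).
  set (g12 := I (fun t => cos t * sin t * rho t)).
  assert (HF : forall al be, I (fun t => (al * cos t + be * sin t) ^ 2 * rho t) = al ^ 2 * g11 + 2 * al * be * g12 + be ^ 2 * g22).
  { intros al be. rewrite (I_ext _ (fun t => al ^ 2 * (cos t ^ 2 * rho t) + (2 * al * be) * (cos t * sin t * rho t) + be ^ 2 * (sin t ^ 2 * rho t))) by (intros; ring).
    ilin. reflexivity. }
  assert (Hper : forall al be, per (fun t => (al * cos t + be * sin t) ^ 2 * rho t)).
  { intros al be t. rewrite per_cos, per_sin, Hp. reflexivity. }
  assert (Hnn : forall al be t, 0 <= (al * cos t + be * sin t) ^ 2 * rho t).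
  { intros. apply Rmult_le_pos. apply pow2_ge_0. left; auto. }
  assert (H22 : 0 < g22).
  { assert (Hv : 0 < (0 * cos (PI / 2) + 1 * sin (PI / 2)) ^ 2 * rho (PI / 2)).
    { rewrite sin_PI2, cos_PI2. specialize (Hpos (PI / 2)). simpl. lra. }
    pose proof (I_pos_pt (fun t => (0 * cos t + 1 * sin t) ^ 2 * rho t) (PI / 2) ltac:(intros t; cont) (Hper 0 1) (Hnn 0 1) Hv) as H.
    rewrite HF in H. replace (0 ^ 2 * g11 + 2 * 0 * 1 * g12 + 1 ^ 2 * g22) with g22 in H by ring. exact H. }
  assert (Hmain : 0 < g22 * (g11 * g22 - g12 ^ 2)).
  { pose proof (I_pos_pt (fun t => (g22 * cos t + (- g12) * sin t) ^ 2 * rho t) 0 ltac:(intros t; cont) (Hper g22 (- g12)) (Hnn g22 (- g12))) as H.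
    rewrite HF in H. replace (g22 * (g11 * g22 - g12 ^ 2)) with (g22 ^ 2 * g11 + 2 * g22 * - g12 * g12 + (- g12) ^ 2 * g22) by ring. apply H.
    rewrite sin_0, cos_0. specialize (Hpos 0). replace ((g22 * 1 + - g12 * 0) ^ 2) with (g22 ^ 2) by ring.
    apply Rmult_lt_0_compat; auto. apply pow_lt; auto. }
  apply (Rmult_lt_reg_l g22); auto. lra.
Qed.

Lemma final_abs (lam : Rbar) A B C : 0 <= A -> 0 <= C -> A <= B -> B ^ 2 <= A * C ->
  (0 < A -> Rbar_le lam (Finite (B / A))) ->
  Rbar_le (Rbar_mult lam (Finite (B - A))) (Finite (C - B)).
Proof.
  intros HA HC HAB Hcs Hl.
  destruct (Rle_lt_or_eq_dec 0 A HA) as [Hp|Hz].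
  - assert (HCB : B <= C).
    { assert (B * B <= A * C) by (simpl in Hcs; lra).
      assert (A * B <= B * B) by nra. nra. }
    destruct (Rle_lt_or_eq_dec A B HAB) as [Hlt|Heq].
    + specialize (Hl Hp). destruct lam as [l| |]; simpl in Hl |- *; try tauto.
      * assert (l * (B - A) <= B / A * (B - A)) by (apply Rmult_le_compat_r; lra).
        assert (E : B / A * (B - A) = B * B / A - B) by (field; lra).
        assert (B * B / A <= C).
        { apply (Rmult_le_reg_r A); auto. unfold Rdiv. rewrite Rmult_assoc, Rinv_l by lra. simpl in Hcs. lra. }
        lra.
      * unfold Rbar_mult, Rbar_mult'. destruct (Rle_dec 0 (B - A)) as [H|H]; [|lra].
        destruct (Rle_lt_or_eq_dec 0 (B - A) H); simpl; [exact Logic.I|lra].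
    + subst B. rewrite Rminus_diag, Rbar_mult_0_r. simpl. lra.
  - subst A. assert (B = 0) by (simpl in Hcs; nra). subst B.
    rewrite Rminus_diag, Rbar_mult_0_r. simpl. lra.
Qed.

Lemma trig_orth (h h1 h2 : R -> R) : C2t h h1 h2 -> per h ->
  I (fun t => cos t * (h2 t + h t)) = 0 /\ I (fun t => sin t * (h2 t + h t)) = 0.
Proof.
  intros HC Hp. pose proof (C2t_cont0 _ _ _ HC) as C0. pose proof (C2t_cont1 _ _ _ HC) as C1.
  destruct HC as [D1 [D2' C2]]. assert (P1 : per h1) by (apply (per_deriv h h1); auto).
  split.
  - apply (I_deriv0 (fun t => cos t * h1 t + sin t * h t)).
    intros t; rewrite per_cos, per_sin, P1, Hp; auto.
    intros t; eapply d_eq. der. cbv beta; ring. intros t; cont.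
  - apply (I_deriv0 (fun t => sin t * h1 t - cos t * h t)).
    intros t; rewrite per_cos, per_sin, P1, Hp; auto.
    intros t; eapply d_eq. der. cbv beta; ring. intros t; cont.
Qed.

Lemma part1_core (hK k1 k2 hL l1 l2 : R -> R) :
  body_Kplus2 hK -> body_Kplus2 hL -> C2t hK k1 k2 -> C2t hL l1 l2 ->
  0 <= mixed_area hK hL ^ 2 / area hK - area hL /\
  Rbar_le (Rbar_mult (lambda2 hK) (Finite (mixed_area hK hL ^ 2 / area hK - area hL)))
      (Finite (/ 2 * bd_integral hL (fun t => / curv_rel hL hK t * hK t) - area hL)).
Proof.
  intros HbK HbL HK HL.
  pose proof HbK as [[HpK _] [HKpos HKq]]. pose proof HbL as [[HpL _] [HLpos HLq]].
  pose proof (C2t_cont0 _ _ _ HK) as ChK. pose proof (C2t_cont1 _ _ _ HK) as Ck1.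
  pose proof (C2t_cont0 _ _ _ HL) as ChL. pose proof (C2t_cont1 _ _ _ HL) as Cl1.
  pose proof (D2_eq _ _ _ HK) as HqD. pose proof (D2_eq _ _ _ HL) as HpD.
  pose proof (trig_orth _ _ _ HK HpK) as [Jcq Jsq].
  pose proof (trig_orth _ _ _ HL HpL) as [Jcp Jsp].
  pose proof HK as [DK1 [DK2 Ck2]]. pose proof HL as [DL1 [DL2 Cl2]].
  assert (Pk1 : per k1) by (apply (per_deriv hK k1); auto).
  assert (Pl1 : per l1) by (apply (per_deriv hL l1); auto).
  assert (Pk2 : per k2) by (apply (per_deriv k1 k2); auto).
  assert (Pl2 : per l2) by (apply (per_deriv l1 l2); auto).
  set (q := fun t => k2 t + hK t). set (p := fun t => l2 t + hL t).
  assert (Hq : forall t, 0 < q t) by (intros t; unfold q; rewrite <- HqD; auto).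
  assert (Hp : forall t, 0 < p t) by (intros t; unfold p; rewrite <- HpD; auto).
  assert (Hqn : forall t, q t <> 0) by (intros t; specialize (Hq t); lra).
  assert (HKn : forall t, hK t <> 0) by (intros t; specialize (HKpos t); lra).
  assert (Cq : cont q) by (intros t; unfold q; cont).
  assert (Cp : cont p) by (intros t; unfold p; cont).
  set (S := I (fun t => hK t * p t)). set (T := I (fun t => hK t * q t)).
  set (U := I (fun t => hL t * p t)). set (Wp := I (fun t => p t ^ 2 * hK t / q t)).
  assert (EM : mixed_area hK hL = / 2 * S).
  { unfold mixed_area. rewrite bd_int_eq by auto. f_equal. apply I_ext. intros x; rewrite HpD; reflexivity. }
  assert (EK : area hK = / 2 * T).
  { unfold area. rewrite bd_int_eq by auto. f_equal. apply I_ext. intros x; rewrite HqD; reflexivity. }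
  assert (EL : area hL = / 2 * U).
  { unfold area. rewrite bd_int_eq by auto. f_equal. apply I_ext. intros x; rewrite HpD; reflexivity. }
  assert (EY : bd_integral hL (fun t => / curv_rel hL hK t * hK t) = Wp).
  { rewrite bd_int_eq by auto. apply I_ext. intros x. unfold curv_rel, curv.
    rewrite !speed_eq by auto. rewrite HpD, HqD. fold (q x) (p x).
    specialize (Hp x). specialize (Hq x). field. split; lra. }
  rewrite EM, EK, EL, EY.
  assert (J1 : I (fun t => hL t * q t) = S).
  { assert (H : I (fun t => hK t * p t - hL t * q t) = 0).
    { apply (I_deriv0 (fun t => hK t * l1 t - k1 t * hL t)).
      intros t; rewrite HpK, Pl1, Pk1, HpL; auto.
      intros t; eapply d_eq. der. unfold p, q; cbv beta; ring. intros t; cont. }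
    ilin_in H. unfold S. lra. }
  assert (HT : 0 < T).
  { apply I_gt0. intros t; cont. intros t. apply Rmult_lt_0_compat; auto. }
  set (a := S / T).
  set (rh := fun t => q t / hK t).
  assert (Crh : cont rh) by (intros t; unfold rh; cont; auto).
  assert (Prh : per rh) by (intros t; unfold rh, q; rewrite Pk2, HpK; auto).
  assert (Hrh : forall t, 0 < rh t) by (intros t; unfold rh; apply Rdiv_lt_0_compat; auto).
  pose proof (gram_pos rh Crh Prh Hrh) as Hdet.
  set (g11 := I (fun t => cos t ^ 2 * rh t)). set (g22 := I (fun t => sin t ^ 2 * rh t)).
  set (g12 := I (fun t => cos t * sin t * rh t)).
  set (r1 := I (fun t => hL t * cos t * rh t)). set (r2 := I (fun t => hL t * sin t * rh t)).
  fold g11 g22 g12 in Hdet.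
  set (det := g11 * g22 - g12 ^ 2) in Hdet.
  set (v1 := (r1 * g22 - r2 * g12) / det). set (v2 := (g11 * r2 - g12 * r1) / det).
  set (f := fun t => hL t - a * hK t - v1 * cos t - v2 * sin t).
  set (f1 := fun t => l1 t - a * k1 t + v1 * sin t - v2 * cos t).
  set (f2 := fun t => l2 t - a * k2 t + v1 * cos t + v2 * sin t).
  assert (HF : C2t f f1 f2).
  { split; [|split].
    - intros t; unfold f, f1; eapply d_eq. der. cbv beta; ring.
    - intros t; unfold f1, f2; eapply d_eq. der. cbv beta; ring.
    - intros t; unfold f2; cont. }
  assert (Pf : per f) by (intros t; unfold f; rewrite HpL, HpK, per_cos, per_sin; auto).
  assert (Cf : cont f) by (apply (C2t_cont0 _ _ _ HF)).
  assert (Hf2 : forall t, f2 t + f t = p t - a * q t) by (intros t; unfold f2, f, p, q; ring).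
  assert (O0 : I (fun t => f t * q t) = 0).
  { rewrite (I_ext _ (fun t => hL t * q t - a * (hK t * q t) - v1 * (cos t * q t) - v2 * (sin t * q t))) by (intros; unfold f; ring).
    ilin. rewrite J1. fold T.
    rewrite (I_ext (fun t => cos t * q t) (fun t => cos t * (k2 t + hK t))) by reflexivity.
    rewrite (I_ext (fun t => sin t * q t) (fun t => sin t * (k2 t + hK t))) by reflexivity.
    rewrite Jcq, Jsq. unfold a. field. lra. }
  assert (O1 : I (fun t => f t * cos t * rh t) = 0).
  { rewrite (I_ext _ (fun t => hL t * cos t * rh t - a * (cos t * (k2 t + hK t)) - v1 * (cos t ^ 2 * rh t) - v2 * (cos t * sin t * rh t))).
    2:{ intros x; unfold f, rh, q. field. auto. }
    ilin. rewrite Jcq. fold r1 g11 g12. unfold v1, v2, det. field. unfold det in Hdet; lra. }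
  assert (O2 : I (fun t => f t * sin t * rh t) = 0).
  { rewrite (I_ext _ (fun t => hL t * sin t * rh t - a * (sin t * (k2 t + hK t)) - v1 * (cos t * sin t * rh t) - v2 * (sin t ^ 2 * rh t))).
    2:{ intros x; unfold f, rh, q. field. auto. }
    ilin. rewrite Jsq. fold r2 g22 g12. unfold v1, v2, det. field. unfold det in Hdet; lra. }
  set (w := fun t => f t / hK t).
  set (w1 := fun t => (f1 t * hK t - f t * k1 t) / hK t ^ 2).
  set (w2 := fun t => ((f2 t * hK t - f t * k2 t) * hK t ^ 2 - (f1 t * hK t - f t * k1 t) * (2 * k1 t * hK t)) / (hK t ^ 2) ^ 2).
  assert (HW : C2t w w1 w2) by (apply C2t_div; auto).
  assert (Pw : per w) by (intros t; unfold w; rewrite Pf, HpK; auto).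
  assert (Cw : cont w) by (apply (C2t_cont0 _ _ _ HW)).
  pose proof HF as [_ [_ Cf2]].
  set (rho := fun t => / 2 * hK t * q t).
  set (M := fun t => w t - (f2 t + f t) / q t).
  assert (Crho : cont rho) by (intros t; unfold rho; cont).
  assert (CM : cont M) by (intros t; unfold M; cont; auto).
  set (A := I (fun t => w t ^ 2 * rho t)).
  set (B := I (fun t => w t * M t * rho t)).
  set (C := I (fun t => M t ^ 2 * rho t)).
  assert (Ewh : (fun s => w s * hK s) = f).
  { apply functional_extensionality. intros x. unfold w. field. auto. }
  assert (FB : int_dVK hK (fun t => w t * - L_op hK w t) = B).
  { unfold int_dVK, int_S1, L_op. rewrite Ewh. apply I_ext. intros x.
    rewrite (D2_eq _ _ _ HF), HqD. unfold M, rho. fold (q x). field. auto. }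
  assert (FA : int_dVK hK (fun t => w t ^ 2) = A).
  { unfold int_dVK, int_S1. apply I_ext. intros x. rewrite HqD. reflexivity. }
  assert (Jf : I (fun t => f t * (f2 t + f t)) = U - 2 * a * S + a ^ 2 * T).
  { rewrite (I_ext _ (fun t => hL t * p t - a * (hL t * q t) - a * (hK t * p t) + a ^ 2 * (hK t * q t)
        - v1 * (cos t * (l2 t + hL t)) - v2 * (sin t * (l2 t + hL t)) + (a * v1) * (cos t * (k2 t + hK t)) + (a * v2) * (sin t * (k2 t + hK t)))).
    2:{ intros x. rewrite Hf2. unfold f, p, q. ring. }
    ilin. rewrite J1, Jcq, Jsq, Jcp, Jsp. fold U S T. ring. }
  assert (JW : I (fun t => (f2 t + f t) ^ 2 * hK t / q t) = Wp - 2 * a * S + a ^ 2 * T).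
  { rewrite (I_ext _ (fun t => p t ^ 2 * hK t / q t - (2 * a) * (hK t * p t) + a ^ 2 * (hK t * q t))).
    2:{ intros x. rewrite Hf2. field. auto. }
    ilin. reflexivity. }
  assert (EBA : B - A = - / 2 * I (fun t => f t * (f2 t + f t))).
  { unfold B, A. rewrite <- I_minus by (intros t; cont). rewrite <- I_scal by (intros t; cont).
    apply I_ext. intros x. unfold M, rho, w. field. split; auto. }
  assert (ECB : C - B = - / 2 * I (fun t => f t * (f2 t + f t)) + / 2 * I (fun t => (f2 t + f t) ^ 2 * hK t / q t)).
  { unfold C, B. rewrite <- I_minus by (intros t; cont). rewrite <- !I_scal by (intros t; cont; auto).
    rewrite <- I_plus by (intros t; cont; auto).
    apply I_ext. intros x. unfold M, rho, w. field. split; auto. }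
  assert (Mink : I (fun t => f t * (f2 t + f t)) <= 0).
  { apply (Minkowski hK k1 k2 f f1 f2); auto. }
  assert (CS : B ^ 2 <= A * C).
  { apply CS_int; auto. intros t. unfold rho. left. apply Rmult_lt_0_compat; auto. apply Rmult_lt_0_compat; auto. lra. }
  assert (HA : 0 <= A).
  { apply I_ge0. intros t; cont. intros t. apply Rmult_le_pos. apply pow2_ge_0.
    unfold rho. left. apply Rmult_lt_0_compat; auto. apply Rmult_lt_0_compat; auto. lra. }
  assert (HC : 0 <= C).
  { apply I_ge0. intros t; cont. intros t. apply Rmult_le_pos. apply pow2_ge_0.
    unfold rho. left. apply Rmult_lt_0_compat; auto. apply Rmult_lt_0_compat; auto. lra. }
  assert (EX : (/ 2 * S) ^ 2 / (/ 2 * T) - / 2 * U = B - A).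
  { rewrite EBA, Jf. unfold a. field. lra. }
  assert (EY2 : / 2 * Wp - / 2 * U = C - B).
  { rewrite ECB, Jf, JW. ring. }
  assert (HAB : A <= B) by nra.
  rewrite EX, EY2. split. lra.
  apply final_abs; auto.
  intros HApos.
  unfold lambda2. destruct (Glb_Rbar_correct (rayleigh_set hK)) as [Hlb _]. apply Hlb.
  exists w. split; [|split; [|split; [|split]]].
  - apply (C2t_S1 w w1 w2); auto.
  - apply NNPP. intros Hn.
    assert (Hz : A = 0).
    { unfold A. rewrite (I_ext _ (fun _ => 0)). rewrite I_const; ring.
      intros x. destruct (Req_dec (w x) 0) as [E|E]. rewrite E; simpl; ring. exfalso; apply Hn; exists x; auto. }
    lra.
  - unfold int_dVK, int_S1. change (I (fun t => w t * (/ 2 * hK t * D2 hK t)) = 0).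
    rewrite (I_ext _ (fun t => / 2 * (f t * q t))). rewrite I_scal by (intros t; cont). rewrite O0; ring.
    intros x. rewrite HqD. fold (q x). unfold w. field. auto.
  - intros u1 u2. unfold int_dVK, int_S1.
    change (I (fun t => w t * ell hK u1 u2 t * (/ 2 * hK t * D2 hK t)) = 0).
    rewrite (I_ext _ (fun t => (u1 / 2) * (f t * cos t * rh t) + (u2 / 2) * (f t * sin t * rh t))).
    ilin. rewrite O1, O2. ring.
    intros x. rewrite HqD. fold (q x). unfold w, ell, rh. field. auto.
  - rewrite FB, FA. reflexivity.
Qed.

Lemma part1 (hK hL : R -> R) :
  body_Kplus2 hK -> body_Kplus2 hL ->
  0 <= mixed_area hK hL ^ 2 / area hK - area hL /\
  Rbar_le (Rbar_mult (lambda2 hK) (Finite (mixed_area hK hL ^ 2 / area hK - area hL)))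
      (Finite (/ 2 * bd_integral hL (fun t => / curv_rel hL hK t * hK t) - area hL)).
Proof.
  intros HbK HbL. apply (part1_core hK (Derive hK) (Derive (Derive hK)) hL (Derive hL) (Derive (Derive hL))); auto.
  apply C2t_of, HbK. apply C2t_of, HbL.
Qed.

Lemma C2t_one : C2t (fun _ => 1) (fun _ => 0) (fun _ => 0).
Proof. split; [|split]; intros t. apply d_const. apply d_const. apply c_const. Qed.

Lemma D2_one t : D2 (fun _ => 1) t = 1.
Proof. rewrite (D2_eq _ _ _ C2t_one). ring. Qed.

Lemma body_one : body_Kplus2 (fun _ => 1).
Proof.
  split; [|split].
  - apply (C2t_S1 (fun _ => 1) (fun _ => 0) (fun _ => 0)). intros t; reflexivity. apply C2t_one.
  - intros; lra.
  - intros t; rewrite D2_one; lra.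
Qed.

Lemma lambda2_one : Rbar_le (Finite 4) (lambda2 (fun _ => 1)).
Proof.
  unfold lambda2. destruct (Glb_Rbar_correct (rayleigh_set (fun _ => 1))) as [_ Hglb]. apply Hglb.
  intros x [z [Hz [[t0 Ht0] [H0 [Hv Hx]]]]]. simpl.
  pose proof (C2t_of z Hz) as HC. pose proof Hz as [Pz _].
  pose proof (C2t_cont0 _ _ _ HC) as Cz. pose proof (C2t_cont1 _ _ _ HC) as Cz1.
  pose proof HC as [D1 [D2' C2]].
  set (z1 := Derive z) in *. set (z2 := Derive z1) in *.
  assert (Pz1 : per z1) by (apply (per_deriv z z1); auto).
  assert (Ed : forall F, int_dVK (fun _ => 1) F = I (fun t => / 2 * F t)).
  { intros F. unfold int_dVK, int_S1. apply I_ext. intros y. rewrite D2_one. ring. }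
  rewrite !Ed in Hx. rewrite Ed in H0.
  assert (Iz : I z = 0).
  { rewrite I_scal in H0 by auto. lra. }
  assert (Izc : I (fun t => z t * cos t) = 0).
  { specialize (Hv 1 0). rewrite Ed in Hv. unfold ell in Hv.
    rewrite (I_ext _ (fun t => / 2 * (z t * cos t))) in Hv by (intros; field).
    rewrite I_scal in Hv by (intros t; cont). lra. }
  assert (Izs : I (fun t => z t * sin t) = 0).
  { specialize (Hv 0 1). rewrite Ed in Hv. unfold ell in Hv.
    rewrite (I_ext _ (fun t => / 2 * (z t * sin t))) in Hv by (intros; field).
    rewrite I_scal in Hv by (intros t; cont). lra. }
  pose proof (W2 z z1 Pz D1 Cz1 Iz Izc Izs) as HW.
  assert (Hibp : I (fun t => z1 t ^ 2 + z t * z2 t) = 0).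
  { apply (I_deriv0 (fun t => z t * z1 t)). intros t; rewrite Pz, Pz1; auto.
    intros t; eapply d_eq. der. cbv beta; ring. intros t; cont. }
  ilin_in Hibp.
  assert (Ez : (fun s => z s * 1) = z) by (apply functional_extensionality; intros; ring).
  assert (En : I (fun t => / 2 * (z t * - L_op (fun _ => 1) z t)) = / 2 * I (fun t => z1 t ^ 2)).
  { unfold L_op. rewrite Ez. rewrite (I_ext _ (fun t => (- / 2) * (z t * z2 t))).
    rewrite I_scal by (intros t; cont). lra.
    intros y. rewrite D2_one, (D2_eq _ _ _ HC). field. }
  assert (Ed2 : I (fun t => / 2 * z t ^ 2) = / 2 * I (fun t => z t ^ 2)).
  { rewrite I_scal by (intros t; cont). reflexivity. }
  assert (Hpos : 0 < I (fun t => z t ^ 2)).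
  { apply (I_pos_pt _ t0). intros t; cont. apply per_sq; auto. intros; apply pow2_ge_0.
    simpl. rewrite Rmult_1_r. apply Rsqr_pos_lt. exact Ht0. }
  rewrite Hx, En, Ed2.
  replace (/ 2 * I (fun t => z1 t ^ 2) / (/ 2 * I (fun t => z t ^ 2))) with (I (fun t => z1 t ^ 2) / I (fun t => z t ^ 2)) by (field; lra).
  apply (Rmult_le_reg_r (I (fun t => z t ^ 2))); auto.
  unfold Rdiv. rewrite Rmult_assoc, Rinv_l by lra. lra.
Qed.

Lemma part2 (hL : R -> R) : body_Kplus2 hL ->
  / 2 * bd_integral hL (fun t => / curv hL t) - area hL
      >= 4 * (perimeter hL ^ 2 / (4 * PI) - area hL).
Proof.
  intros HbL. pose proof PI_RGT_0 as Hpi.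
  destruct (part1 (fun _ => 1) hL body_one HbL) as [HX HY].
  assert (Ea : area (fun _ => 1) = PI).
  { unfold area. rewrite bd_int_eq by apply body_one.
    rewrite (I_ext _ (fun _ => 1)). rewrite I_const; field. intros; rewrite D2_one; ring. }
  assert (Em : mixed_area (fun _ => 1) hL = / 2 * perimeter hL) by reflexivity.
  assert (Eb : bd_integral hL (fun t => / curv_rel hL (fun _ => 1) t * 1) = bd_integral hL (fun t => / curv hL t)).
  { unfold bd_integral. apply RI_ext. intros x. unfold curv_rel. f_equal.
    assert (E1 : curv (fun _ => 1) x = 1).
    { unfold curv. rewrite speed_eq by apply body_one. rewrite D2_one. apply Rinv_1. }
    rewrite E1. unfold Rdiv. rewrite Rinv_1, !Rmult_1_r. reflexivity. }
  rewrite Ea, Em, Eb in *.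
  set (X := (/ 2 * perimeter hL) ^ 2 / PI - area hL) in *.
  set (Y := / 2 * bd_integral hL (fun t => / curv hL t) - area hL) in *.
  assert (EX : perimeter hL ^ 2 / (4 * PI) - area hL = X) by (unfold X; field; lra).
  rewrite EX. apply Rle_ge.
  pose proof lambda2_one as H4.
  destruct (Rle_lt_or_eq_dec 0 X HX) as [Hp|Hz].
  - destruct (lambda2 (fun _ => 1)) as [l| |]; simpl in H4, HY.
    + assert (4 * X <= l * X) by (apply Rmult_le_compat_r; lra). lra.
    + unfold Rbar_mult, Rbar_mult' in HY. destruct (Rle_dec 0 X) as [H|H]; [|lra].
      destruct (Rle_lt_or_eq_dec 0 X H); simpl in HY; [tauto|lra].
    + tauto.
  - rewrite <- Hz in HY |- *. rewrite Rbar_mult_0_r in HY. simpl in HY. lra.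
Qed.

Theorem theorem5p6 :
  (forall hK hL : R -> R,
    body_Kplus2 hK -> body_Kplus2 hL ->
    Rbar_le
      (Rbar_mult (lambda2 hK)
         (Finite (mixed_area hK hL ^ 2 / area hK - area hL)))
      (Finite (/ 2 * bd_integral hL (fun t => / curv_rel hL hK t * hK t)
               - area hL)))
  /\
  (forall hL : R -> R,
    body_Kplus2 hL ->
    / 2 * bd_integral hL (fun t => / curv hL t) - area hL
      >= 4 * (perimeter hL ^ 2 / (4 * PI) - area hL)).
Proof.
  split.
  - intros hK hL HK HL. apply (part1 hK hL HK HL).
  - apply part2.
Qed.
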